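(* Let $\mathcal{T}=(V,A,E,f,q,v_0)$ be a decorated rooted tree such that $f(\alpha)\in\{0,1\}$ for all $\alpha\in A$. Then for every out-pair $(x,e)$ of $\mathcal{T}$, $$p(x,e)=1+\sum_{y\in Y(x,e)}\phi(x,y)(\delta_y-2).$$
   Context: A graph is a pair $(X_0,X_1)$ of finite sets such that each element of $X_1$ (an edge) is a $2$-element subset of $X_0$; elements of $X_0$ are cells. The valency $\delta_x$ of a cell is the number of edges containing it. A path is a tuple $(x_0,\dots,x_n)$ ($n\ge0$) of cells with $\{x_i,x_{i+1}\}$ an edge for each $i<n$, these edges pairwise distinct; a cell/edge is in the path if it is some $x_i$ / some $\{x_i,x_{i+1}\}$. The graph is a tree if any two cells $x,y$ are joined by a unique path $\gamma_{x,y}$. A decorated tree is $(V,A,E,f,q)$ with $V$ (vertices), $A$ (arrows) finite disjoint sets, $(V\cup A,E)$ a tree, every arrow of valency $1$, $f:A\to\mathbb{Z}$, $q(e,x)\in\mathbb{Z}$ for each $e\in E$, $x\in e$, with $q(e,\alpha)=1$ for $\alpha\in A$, and for each $v\in V$ and distinct edges $e,e'\ni v$, $\gcd(q(e,v),q(e',v))=1$. $A_0=\{\alpha\in A:f(\alpha)=0\}$. An edge $\varepsilon$ is incident to a path $\gamma$ if it is not in $\gamma$ but contains a cell $u$ of $\gamma$; $q(\varepsilon,\gamma):=q(\varepsilon,u)$. For $v\ne\alpha$, $v\in V\cup A$, $\alpha\in A$: $\hat x_{v,\alpha}=f(\alpha)\prod_\varepsilon q(\varepsilon,\gamma_{v,\alpha})$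 over edges $\varepsilon$ incident to $\gamma_{v,\alpha}$ and not containing $v$ (empty product $=1$). For $u\in V\cup A$, $e\ni u$: $p(u,e)=\sum\hat x_{u,\alpha}$ over $\alpha\in A\setminus A_0$ with $e$ in $\gamma_{u,\alpha}$. For a path $\gamma=(x_0,\dots,x_n)$, $n\ge1$, $\phi(\gamma)$ is the product of $q(e,u)$ over all pairs with $u\in\{x_1,\dots,x_n\}$ and $e$ an edge containing $u$ not in $\gamma$; for $x\ne y$, $\phi(x,y)=\phi(\gamma_{x,y})$. For $x\in V\cup A$ and an edge $e\ni x$, $Y(x,e)=\{y\in V\cup A_0: e \text{ is in } \gamma_{x,y}\}$. A root of $(V,A,E,f,q)$ is a vertex $v_0$ with $q(e,v_0)=1$ for every edge $e\ni v_0$ such that for every $v\in V\setminus\{v_0\}$, all edges $e\ni v$ not in $\gamma_{v_0,v}$ satisfy $q(e,v)\ge1$ and at most one of them satisfies $q(e,v)\ne1$. A decorated rooted tree is $(V,A,E,f,q,v_0)$ with $v_0$ a root. For distinct $x,y$, $x<y$ means $x$ is in $\gamma_{v_0,y}$. An out-pair is a pair $(x,e)$ with $x\in V\cup A$ and $e=\{x,x'\}$ an edge such that $x<x'$. *)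

(* Defs.v *)
From Stdlib Require Import ClassicalEpsilon.
From mathcomp Require Import all_boot all_order all_algebra.
Set Implicit Arguments. Unset Strict Implicit. Unset Printing Implicit Defensive.
Import Order.TTheory GRing.Theory Num.Theory.
Local Open Scope ring_scope.

(* Cells X_0 = V \cup A are the elements of a finType T; the arrows are the
   cells satisfying [isA], the vertices those not satisfying it.
   Edges form a set E of subsets of T (each required to have 2 elements).
   q e x is an integer for each edge e and cell x (only meaningful for x \in e).
   f is an integer labelling (only meaningful on arrows). *)
Section Defs.
Variable T : finType.
Variable E : {set {set T}}.

Definition edges_of (s : seq T) : seq {set T} :=
  [seq [set ab.1; ab.2] | ab <- zip s (behead s)].

Definition is_path (s : seq T) : bool :=
  (s != [::]) && all (fun e => e \in E) (edges_of s) && uniq (edges_of s).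

Definition path_from (x y : T) (s : seq T) : bool :=
  [&& is_path s, head x s == x & last x s == y].

Definition is_graph : Prop := forall e, e \in E -> #|e| = 2.

Definition is_tree : Prop :=
  is_graph /\ forall x y : T, exists! s : seq T, path_from x y s.

Definition gamma (x y : T) : seq T :=
  epsilon (inhabits [::]) (fun s => path_from x y s).

Definition valency (x : T) : nat := #|[set e in E | x \in e]|.

Variable isA : pred T.
Variable f : T -> int.
Variable q : {set T} -> T -> int.

Definition is_vertex (x : T) : bool := ~~ isA x.
Definition in_A0 (x : T) : bool := isA x && (f x == 0).

Definition decorated_tree : Prop :=
  [/\ is_tree,
      (forall a, isA a -> valency a = 1%N),
      (forall e a, e \in E -> a \in e -> isA a -> q e a = 1) &
      (forall v e e', is_vertex v -> e \in E -> e' \in E -> v \in e -> v \in e' ->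
          e != e' -> gcdz (q e v) (q e' v) = 1)].

Definition incident (eps : {set T}) (g : seq T) : bool :=
  [&& eps \in E, eps \notin edges_of g & [exists u in eps, u \in g]].

Definition q_path (eps : {set T}) (g : seq T) : int :=
  match [pick u in eps | u \in g] with Some u => q eps u | None => 1 end.

Definition xhat (v a : T) : int :=
  f a * \prod_(eps in E | incident eps (gamma v a) && (v \notin eps))
          q_path eps (gamma v a).

Definition pfun (u : T) (e : {set T}) : int :=
  \sum_(a : T | [&& isA a, f a != 0 & e \in edges_of (gamma u a)]) xhat u a.

Definition phi_path (g : seq T) : int :=
  \prod_(u <- behead g) \prod_(e in E | (u \in e) && (e \notin edges_of g)) q e u.

Definition phi (x y : T) : int := phi_path (gamma x y).

Definition Yset (x : T) (e : {set T}) : {set T} :=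
  [set y | (is_vertex y || in_A0 y) && (e \in edges_of (gamma x y))].

Definition is_root (v0 : T) : Prop :=
  [/\ is_vertex v0,
      (forall e, e \in E -> v0 \in e -> q e v0 = 1) &
      forall v, is_vertex v -> v != v0 ->
        (forall e, e \in E -> v \in e -> e \notin edges_of (gamma v0 v) -> 1 <= q e v)
        /\ (#|[set e in E | (v \in e) && (e \notin edges_of (gamma v0 v))
                             && (q e v != 1)]| <= 1)%N].

Definition decorated_rooted_tree (v0 : T) : Prop := decorated_tree /\ is_root v0.

Definition tree_lt (v0 x y : T) : bool := (x != y) && (x \in gamma v0 y).

Definition out_pair (v0 x : T) (e : {set T}) : Prop :=
  e \in E /\ exists x', e = [set x; x'] /\ tree_lt v0 x x'.

End Defs.

(* Main.v *)
Require Import Defs.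
From Stdlib Require Import ClassicalEpsilon.
From mathcomp Require Import all_boot all_order all_algebra.
Set Implicit Arguments. Unset Strict Implicit. Unset Printing Implicit Defensive.
From mathcomp Require Import ring lra zify.
Import Order.TTheory GRing.Theory Num.Theory.
Local Open Scope ring_scope.

Lemma sum_prod_excl (I : finType) (C : {set I}) (w : I -> int) :
  (#|[set i in C | w i != 1]| <= 1)%N ->
  \sum_(i in C) \prod_(j in C | j != i) w j = 1 + (\prod_(j in C) w j) * (#|C|%:Z - 1).
Proof.
move=> Hc.
case: (eqVneq [set i in C | w i != 1] set0) => [H0 | /set0Pn [i0 Hi0]].
  have Hw : forall j, j \in C -> w j = 1.
    move=> j Hj; apply/eqP; apply: contraT => Hne.
    by move: (in_set0 j); rewrite -H0 inE Hj Hne.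
  have -> : \prod_(j in C) w j = 1 by apply: big1 => j Hj; by apply: Hw.
  rewrite mul1r.
  rewrite (eq_bigr (fun _ => 1)); last by move=> i Hi; rewrite big1 // => j /andP[Hj _]; by apply: Hw.
  by rewrite sumr_const natz; lia.
move: Hi0; rewrite inE => /andP[Hi0C Hi0w].
have Hw : forall j, j \in C -> j != i0 -> w j = 1.
  move=> j Hj Hji; apply/eqP; apply: contraTT Hc => Hne; rewrite -ltnNge.
  apply: (@leq_trans #|[set i0; j]|); first by rewrite cards2 eq_sym Hji.
  by apply: subset_leq_card; apply/subsetP => z; rewrite !inE => /orP[]/eqP ->; rewrite ?Hi0C ?Hi0w ?Hj ?Hne.
have -> : \prod_(j in C) w j = w i0.
  rewrite (bigD1 i0) //= big1 /= ?mulr1 // => j /andP[Hj Hji]; by apply: Hw.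
rewrite (bigD1 i0) //=.
rewrite big1; last by move=> j /andP[Hj Hji]; apply: Hw.
rewrite (eq_bigr (fun _ => w i0)); last first.
  move=> i /andP[Hi Hii0]; rewrite (bigD1 i0) /=; last by rewrite Hi0C eq_sym.
  by rewrite big1 /= ?mulr1 // => j /andP[/andP[Hj _] Hji0]; by apply: Hw.
rewrite sumr_const (cardD1 i0 C) Hi0C add1n.
rewrite -mulr_natr natz.
rewrite -addn1 PoszD addrK; congr (1 + _ * Posz _).
by apply: eq_card => i; rewrite !inE andbC.
Qed.

Section Paths.
Variable T : finType.
Variable E : {set {set T}}.
Hypothesis Htree : is_tree E.

Lemma edges_cat (a b : T) (s1 s2 : seq T) :
  edges_of (a :: s1 ++ b :: s2) =
  edges_of (a :: s1) ++ [set last a s1; b] :: edges_of (b :: s2).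
Proof.
elim: s1 a => [|a' s1 IH] a //=.
by rewrite -IH.
Qed.

Lemma edges_catl (s1 s2 : seq T) eps : eps \in edges_of s1 -> eps \in edges_of (s1 ++ s2).
Proof.
case: s1 => [|a s1] //; case: s2 => [|b s2]; first by rewrite cats0.
by rewrite edges_cat mem_cat => ->.
Qed.

Lemma edges_catr (s1 s2 : seq T) eps : eps \in edges_of s2 -> eps \in edges_of (s1 ++ s2).
Proof.
case: s1 => [|a s1] //; case: s2 => [|b s2] //.
by rewrite edges_cat mem_cat inE => ->; rewrite !orbT.
Qed.

Lemma path_prefix (s1 s2 : seq T) : is_path E (s1 ++ s2) -> s1 != [::] -> is_path E s1.
Proof.
case: s1 => [|a s1] //; case: s2 => [|b s2]; first by rewrite cats0.
rewrite /is_path edges_cat all_cat cat_uniq => /andP[/andP[_ /andP[-> _]] /andP[-> _]].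
done.
Qed.

Lemma path_suffix (s1 s2 : seq T) : is_path E (s1 ++ s2) -> s2 != [::] -> is_path E s2.
Proof.
case: s1 => [|a s1] //; case: s2 => [|b s2] //.
rewrite /is_path edges_cat all_cat cat_uniq => /andP[/andP[_ /andP[_ /= /andP[_ ->]]]].
by move=> /and3P[_ _ /= /andP[_ ->]].
Qed.

Lemma mem_edges (s : seq T) eps u : eps \in edges_of s -> u \in eps -> u \in s.
Proof.
elim: s => [|a s IH] //; case: s IH => [|b s] IH //.
rewrite [edges_of _]/= inE => /orP[/eqP -> | H].
  by rewrite !inE => /orP[] ->; rewrite ?orbT.
by move=> Hu; rewrite inE (IH H Hu) orbT.
Qed.

Lemma path_unique x y s1 s2 : path_from E x y s1 -> path_from E x y s2 -> s1 = s2.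
Proof.
move=> H1 H2; have [_ Hu2] := Htree; have [s0 [_ Hu]] := Hu2 x y.
by rewrite -(Hu _ H1) -(Hu _ H2).
Qed.

Lemma gammaP x y : path_from E x y (gamma E x y).
Proof.
have [_ Hu2] := Htree; have [s0 [H _]] := Hu2 x y.
exact: (@epsilon_spec _ (inhabits [::]) (path_from E x y) (ex_intro _ s0 H)).
Qed.

Lemma gammaE x y s : path_from E x y s -> gamma E x y = s.
Proof. by move=> H; apply: path_unique (gammaP x y) H. Qed.

Lemma gamma_path x y : is_path E (gamma E x y).
Proof. by case/and3P: (gammaP x y). Qed.

Lemma path_from_head x y s : path_from E x y s -> s = x :: behead s.
Proof.
case/and3P; case: s => [|a s] //= _ /eqP -> //.
Qed.

Lemma gamma_head x y : gamma E x y = x :: behead (gamma E x y).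
Proof. exact: path_from_head (gammaP x y). Qed.

Lemma gamma_last x y : last x (gamma E x y) = y.
Proof. by case/and3P: (gammaP x y) => _ _ /eqP. Qed.

Lemma path_single x : is_path E [:: x].
Proof. by []. Qed.

Lemma gamma_self x : gamma E x x = [:: x].
Proof. by apply: gammaE; rewrite /path_from path_single /= !eqxx. Qed.

Lemma path_edge x y : [set x; y] \in E -> is_path E [:: x; y].
Proof. by rewrite /is_path /= => ->. Qed.

Lemma gamma_edge x y : [set x; y] \in E -> gamma E x y = [:: x; y].
Proof. by move=> H; apply: gammaE; rewrite /path_from path_edge //= !eqxx. Qed.

Lemma path_uniq (s : seq T) : is_path E s -> uniq s.
Proof.
elim: s => [|a t IH] // Hp.
case: t IH Hp => [|b t] IH Hp //.
have Ht : is_path E (b :: t) by apply: (@path_suffix [:: a]).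
rewrite cons_uniq (IH Ht) andbT.
apply/negP => Hin; move: Hp; case/splitPr: Hin => [t1 t2] Hp.
have Heq : a :: t1 ++ a :: t2 = ([:: a] ++ t1 ++ [:: a]) ++ t2 by rewrite /= -catA.
rewrite Heq in Hp.
have Hc : is_path E ([:: a] ++ t1 ++ [:: a]) by apply: (path_prefix Hp).
have : path_from E a a ([:: a] ++ t1 ++ [:: a]).
  by rewrite /path_from Hc /= eqxx /= last_cat /=.
move/(path_unique (gammaP a a)); rewrite gamma_self.
by case: t1 {Hp Hc Heq}.
Qed.

Lemma gamma_uniq x y : uniq (gamma E x y).
Proof. exact: path_uniq (gamma_path x y). Qed.

Lemma card2_eq (eps : {set T}) a b :
  #|eps| = 2 -> a \in eps -> b \in eps -> a != b -> eps = [set a; b].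
Proof.
move=> Hc Ha Hb Hab; symmetry; apply/eqP; rewrite eqEcard Hc cards2 Hab andbT.
by apply/subsetP => z; rewrite !inE => /orP[] /eqP ->.
Qed.

Lemma edge_card eps : eps \in E -> #|eps| = 2.
Proof. by case: Htree => H _ /H. Qed.

Lemma no_chord (s : seq T) u w : is_path E s -> u \in s -> w \in s -> u != w ->
  [set u; w] \in E -> [set u; w] \in edges_of s.
Proof.
have key : forall (s1 : seq T) u (s2 : seq T) w, is_path E (s1 ++ u :: s2) -> w \in s2 ->
  [set u; w] \in E -> [set u; w] \in edges_of (s1 ++ u :: s2).
  move=> s1 u' s2 w' Hp Hw He; move: Hp; case/splitPr: Hw => [s3 s4] Hp.
  have Heq : s1 ++ u' :: s3 ++ w' :: s4 = s1 ++ (((u' :: s3) ++ [:: w']) ++ s4).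
    by rewrite -catA.
  rewrite Heq in Hp *.
  have Hp' := path_suffix Hp isT.
  have Hq := path_prefix Hp' isT.
  have : path_from E u' w' ((u' :: s3) ++ [:: w']).
    by rewrite /path_from Hq /= eqxx /= last_cat /=.
  move/(path_unique (gammaP u' w')); rewrite gamma_edge //.
  move=> /(congr1 size); rewrite /= size_cat /= addn1.
  case: s3 {Hp Hp' Hq Heq} => [|z s3] //= _.
  apply: edges_catr; apply: (@edges_catl [:: u'; w']).
  by rewrite /= inE eqxx.
move=> Hp Hu Hw Huw He; move: Hp Hw; case/splitPr: Hu => [s1 s2] Hp Hw.
have Hwu : (w == u) = false by rewrite eq_sym (negbTE Huw).
move: Hw; rewrite mem_cat inE Hwu /=.
case/orP => Hw; last by apply: key.
move: Hp He; case/splitPr: Hw => [s3 s4] Hp He.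
rewrite -catA cat_cons in Hp *.
rewrite setUC; apply: key => //; first by rewrite mem_cat inE eqxx orbT.
by rewrite setUC.
Qed.

Lemma edges_cons2 (a b : T) (s : seq T) :
  edges_of (a :: b :: s) = [set a; b] :: edges_of (b :: s).
Proof. by []. Qed.

Lemma head_edge (z : T) (t : seq T) eps : uniq (z :: t) ->
  eps \in edges_of (z :: t) -> z \in eps -> eps = [set z; head z t].
Proof.
case: t => [|b t] Hu; first by [].
rewrite edges_cons2 inE => /orP[/eqP -> //|H] Hz.
by move: Hu; rewrite cons_uniq (mem_edges H Hz).
Qed.

Lemma head_edge_uniq z y eps1 eps2 :
  eps1 \in edges_of (gamma E z y) -> eps2 \in edges_of (gamma E z y) ->
  z \in eps1 -> z \in eps2 -> eps1 = eps2.
Proof.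
have Hu := gamma_uniq z y; rewrite gamma_head in Hu *.
by move=> H1 H2 Hz1 Hz2; rewrite (head_edge Hu H1 Hz1) (head_edge Hu H2 Hz2).
Qed.

Lemma gamma_ex x y : exists t, gamma E x y = x :: t.
Proof. by exists (behead (gamma E x y)); apply: gamma_head. Qed.

Lemma gamma_cons x x' y : [set x; x'] \in E ->
  [set x; x'] \notin edges_of (gamma E x' y) -> gamma E x y = x :: gamma E x' y.
Proof.
move=> He Hn; apply: gammaE.
have Hl := gamma_last x' y; have Hp := gamma_path x' y.
case: (gamma_ex x' y) => t Ht; rewrite Ht in Hn Hl Hp *.
move: Hp; rewrite /path_from /is_path edges_cons2 /= He Hn /=.
by move=> ->; move: Hl => /= ->; rewrite !eqxx.
Qed.

Lemma gamma_decomp x x' y : [set x; x'] \in E -> x != x' ->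
  [set x; x'] \in edges_of (gamma E x y) -> [set x; x'] \notin edges_of (gamma E x' y).
Proof.
move=> He Hxx' Hin.
have Hu := gamma_uniq x y; have Hp := gamma_path x y; have Hl := gamma_last x y.
case: (gamma_ex x y) => t Ht; rewrite Ht in Hu Hp Hl Hin.
have Hh := head_edge Hu Hin (setU11 _ _).
case: t Ht Hu Hp Hl Hin Hh => [|b t] Ht Hu Hp Hl Hin Hh; first by [].
have Hb : x' = b.
  have : x' \in [set x; x'] by rewrite !inE eqxx orbT.
  rewrite Hh !inE => /orP[/eqP Hx|/eqP //].
  by rewrite Hx eqxx in Hxx'.
subst b.
have Hg : gamma E x' y = x' :: t.
  apply: gammaE; rewrite /path_from (@path_suffix [:: x]) //= eqxx /=.
  by move: Hl => /= ->.
rewrite Hg; apply/negP => H.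
by move: Hu; rewrite cons_uniq (mem_edges H (setU11 _ _)).
Qed.

Lemma edge_dir x x' y : [set x; x'] \in E -> x != x' ->
  ([set x; x'] \in edges_of (gamma E x y)) = ([set x; x'] \notin edges_of (gamma E x' y)).
Proof.
move=> He Hxx'; apply/idP/idP; first exact: gamma_decomp.
move=> Hn; rewrite (gamma_cons He Hn).
case: (gamma_ex x' y) => t ->.
by rewrite edges_cons2 inE eqxx.
Qed.

Variable q : {set T} -> T -> int.
Variable f : T -> int.

Lemma q_path_eq (g : seq T) eps u : is_path E g -> eps \in E ->
  eps \notin edges_of g -> u \in eps -> u \in g -> q_path q eps g = q eps u.
Proof.
move=> Hp HE Hn Hu Hg; rewrite /q_path; case: pickP => [u' /andP[Hu' Hg'] | H].
  case: (eqVneq u' u) => [-> //|Hne].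
  have Heq := card2_eq (edge_card HE) Hu' Hu Hne.
  by move: Hn; rewrite Heq (no_chord Hp Hg' Hg Hne) // -Heq.
by move: (H u); rewrite Hu Hg.
Qed.

Definition Cset x x' := [set eps in E | (x' \in eps) && (eps != [set x; x'])].

Lemma xhat_cons x x' y : [set x; x'] \in E -> x != x' ->
  [set x; x'] \notin edges_of (gamma E x' y) ->
  xhat E f q x y = xhat E f q x' y *
    \prod_(eps in Cset x x' | eps \notin edges_of (gamma E x' y)) q eps x'.
Proof.
move=> He Hxx' Hn.
have Hg := gamma_cons He Hn.
have Hu := gamma_uniq x y; have Hp := gamma_path x y; rewrite Hg in Hu Hp.
rewrite /xhat Hg.
have Hp' := gamma_path x' y.
case: (gamma_ex x' y) => t Ht; rewrite Ht in Hu Hp Hn Hp' *.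
have Hxn : x \notin x' :: t by move: Hu; rewrite cons_uniq => /andP[].
have HeE : forall eps : {set T}, x' \in eps -> x \in eps -> eps \in E -> eps = [set x; x'].
  by move=> eps H1 H2 H3; apply: card2_eq => //; apply: edge_card.
rewrite -mulrA; congr (_ * _).
rewrite (bigID (fun eps : {set T} => x' \in eps)) /= mulrC; congr (_ * _).
  apply: eq_big => eps.
    rewrite /incident; case HE: (eps \in E) => //=.
    case Hx: (x \in eps); case Hx': (x' \in eps) => //=; rewrite ?andbF ?andbT //.
      apply/esym/negbTE/negP => /andP[Hne /existsP[u /andP[Hue Hut]]].
      have Hux : x != u by apply: contraNneq Hxn => ->.
      have Heq := card2_eq (edge_card HE) Hx Hue Hux.
      have := no_chord Hp (mem_head _ _) (@mem_behead _ [:: x, x' & t] _ Hut) Hux.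
      rewrite -Heq HE edges_cons2 inE => /(_ isT) /orP[/eqP Heq2|]; last by rewrite (negbTE Hne).
      by move: Hx'; rewrite Heq2 !inE eqxx orbT.
    have Hne : (eps == [set x; x']) = false.
      by apply/negbTE/eqP => Heq2; move: Hx'; rewrite Heq2 !inE eqxx orbT.
    rewrite edges_cons2 in_cons Hne /=; congr (_ && _).
    apply/existsP/existsP => -[u /andP[Hue Hin]]; exists u; rewrite Hue /=.
      by move: Hin; rewrite in_cons => /orP[/eqP Hux|//]; move: Hx; rewrite -Hux Hue.
    by rewrite in_cons Hin orbT.
  rewrite /incident => /andP[/andP[HE /andP[/and3P[_ Hne /existsP[u /andP[Hue Hin]]] Hx]] Hx'].
  have Hut : u \in x' :: t.
    by move: Hin; rewrite in_cons => /orP[/eqP Hux|//]; move: Hx; rewrite -Hux Hue.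
  have Hne' : eps \notin edges_of (x' :: t).
    by move: Hne; rewrite edges_cons2 in_cons negb_or => /andP[].
  by rewrite (q_path_eq Hp HE Hne Hue Hin) (q_path_eq Hp' HE Hne' Hue Hut).
apply: eq_big => eps.
  rewrite /incident edges_cons2 in_cons negb_or /Cset in_set.
  apply/idP/idP.
    by move=> /andP[/and3P[HE /and3P[_ /andP[Hne1 Hne2] _] Hx] Hx']; rewrite HE Hx' Hne1 Hne2.
  move=> /andP[/andP[HE /andP[Hx' Hne1]] Hne2]; rewrite HE Hx' Hne1 Hne2 /= andbT.
  apply/andP; split; first by apply/existsP; exists x'; rewrite Hx' /= inE mem_head orbT.
  by apply: contraNN Hne1 => Hx; apply/eqP; apply: HeE.
rewrite /incident => /andP[/andP[HE /andP[/and3P[_ Hne _] Hx]] Hx'].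
by rewrite (q_path_eq Hp HE Hne Hx') // inE mem_head orbT.
Qed.

Lemma phi_cons x x' y : [set x; x'] \in E -> x != x' ->
  [set x; x'] \notin edges_of (gamma E x' y) ->
  phi E q x y = phi E q x' y *
    \prod_(eps in Cset x x' | eps \notin edges_of (gamma E x' y)) q eps x'.
Proof.
move=> He Hxx' Hn.
have Hg := gamma_cons He Hn.
have Hu := gamma_uniq x y; rewrite Hg in Hu.
rewrite /phi /phi_path Hg.
case: (gamma_ex x' y) => t Ht; rewrite Ht in Hu Hn *.
rewrite [behead _]/= big_cons mulrC; congr (_ * _).
  apply: eq_big_seq => u Hut; apply: eq_bigl => eps.
  rewrite (edges_cons2 x x' t) in_cons negb_or.
  case Hue: (u \in eps); last by rewrite !andFb andbF.
  have Hne : (eps == [set x; x']) = false.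
    apply/negbTE/eqP => Heq2; move: Hue; rewrite Heq2 !inE => /orP[]/eqP Hux.
      by move: Hu; rewrite -Hux /= inE Hut orbT.
    by move: Hu; rewrite -Hux /= => /andP[_ /andP[]]; rewrite Hut.
  by rewrite Hne.
apply: eq_bigl => eps; rewrite edges_cons2 in_cons negb_or /Cset in_set.
by case: (eps \in E); case: (x' \in eps); case: (eps == _).
Qed.
Lemma child_ex x x' y : [set x; x'] \in E -> x != x' -> y != x' ->
  [set x; x'] \in edges_of (gamma E x y) ->
  exists2 e1, e1 \in Cset x x' & e1 \in edges_of (gamma E x' y).
Proof.
move=> He Hxx' Hyx' Hin.
have Hn := gamma_decomp He Hxx' Hin.
have Hl := gamma_last x' y; have Hp := gamma_path x' y.
case: (gamma_ex x' y) => t Ht; rewrite Ht in Hn Hl Hp *.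
case: t Ht Hn Hl Hp => [|b t] Ht Hn Hl Hp.
  by move: Hyx'; rewrite -Hl eqxx.
exists [set x'; b]; last by rewrite edges_cons2 mem_head.
have HE1 : [set x'; b] \in E.
  by move: Hp => /andP[/andP[_ /allP H] _]; apply: H; rewrite edges_cons2 mem_head.
rewrite /Cset in_set setU11 HE1 /=.
by apply: contraNneq Hn => <-; rewrite edges_cons2 mem_head.
Qed.

Lemma child_back x x' y eps : [set x; x'] \in E -> x != x' ->
  eps \in Cset x x' -> eps \in edges_of (gamma E x' y) ->
  [set x; x'] \in edges_of (gamma E x y).
Proof.
move=> He Hxx' Hc Hin; rewrite edge_dir //; apply/negP => H.
move: Hc; rewrite /Cset in_set => /and3P[_ Hx' Hne].
by move: Hne; rewrite (head_edge_uniq Hin H Hx' (set22 _ _)) eqxx.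
Qed.

Lemma child_uniq x x' y eps1 eps2 : eps1 \in Cset x x' -> eps2 \in Cset x x' ->
  eps1 \in edges_of (gamma E x' y) -> eps2 \in edges_of (gamma E x' y) -> eps1 = eps2.
Proof.
rewrite /Cset !in_set => /and3P[_ H1 _] /and3P[_ H2 _] I1 I2.
exact: head_edge_uniq I1 I2 H1 H2.
Qed.

Lemma sum_split (P : pred T) (F : T -> int) x x' : [set x; x'] \in E -> x != x' ->
  \sum_(y | P y && ([set x; x'] \in edges_of (gamma E x y))) F y =
  (if P x' then F x' else 0) +
  \sum_(eps in Cset x x') \sum_(y | P y && (eps \in edges_of (gamma E x' y))) F y.
Proof.
move=> He Hxx'.
have -> : (if P x' then F x' else 0) = \sum_(y | y == x') (if P y then F y else 0).
  by rewrite big_pred1_eq.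
rewrite [in RHS](eq_bigr (fun eps => \sum_y (if P y && (eps \in edges_of (gamma E x' y)) then F y else 0))); last by move=> eps _; rewrite big_mkcond.
rewrite exchange_big /=.
rewrite big_mkcond [X in X + _]big_mkcond -big_split /=.
apply: eq_bigr => y _.
case HP: (P y) => /=; last first.
  by rewrite if_same big1 ?addr0 // => eps _.
case: (eqVneq y x') => [->|Hyx'].
  rewrite gamma_edge // edges_cons2 mem_head big1 ?addr0 // => eps _.
  by rewrite gamma_self.
rewrite add0r.
case HQ: ([set x; x'] \in edges_of (gamma E x y)).
  have [e1 He1 He1y] := child_ex He Hxx' Hyx' HQ.
  rewrite (bigD1 e1) //= He1y big1 ?addr0 // => eps /andP[Hc Hne].
  case: ifP => // Hin.
  by move: Hne; rewrite (child_uniq Hc He1 Hin He1y) eqxx.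
rewrite big1 // => eps Hc; case: ifP => // Hin.
by move: HQ; rewrite (child_back He Hxx' Hc Hin).
Qed.

Definition Dset x x' := [set y | [set x; x'] \in edges_of (gamma E x y)].

Lemma x'_in_D x x' : [set x; x'] \in E -> x' \in Dset x x'.
Proof. by move=> He; rewrite inE gamma_edge // edges_cons2 mem_head. Qed.

Lemma D_proper x x' c : [set x; x'] \in E -> x != x' ->
  [set x'; c] \in Cset x x' -> (#|Dset x' c| < #|Dset x x'|)%N.
Proof.
move=> He Hxx' Hc; apply: proper_card; apply/properP; split.
  by apply/subsetP => y; rewrite !inE => H; apply: child_back Hc H.
by exists x'; rewrite ?x'_in_D // inE gamma_self.
Qed.

Lemma edges_rcons (a z : T) (s : seq T) :
  edges_of (rcons (a :: s) z) = rcons (edges_of (a :: s)) [set last a s; z].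
Proof. by rewrite rcons_cons -cats1 edges_cat cats1. Qed.

Lemma gamma_rcons v x' c : [set x'; c] \in E ->
  [set x'; c] \notin edges_of (gamma E v x') -> gamma E v c = rcons (gamma E v x') c.
Proof.
move=> He Hn; apply: gammaE.
have Hl := gamma_last v x'; have Hp := gamma_path v x'.
case: (gamma_ex v x') => t Ht; rewrite Ht in Hn Hl Hp *.
move: Hl => /= Hl.
rewrite /path_from /is_path edges_rcons Hl all_rcons rcons_uniq He Hn /=.
move: Hp; rewrite /is_path => /andP[/andP[_ -> ] ->].
by rewrite last_rcons !eqxx.
Qed.

Lemma root_edges v x x' : [set x; x'] \in E -> x != x' -> x \in gamma E v x' ->
  forall eps, eps \in E -> x' \in eps ->
  (eps \in edges_of (gamma E v x')) = (eps == [set x; x']).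
Proof.
move=> He Hxx' Hin eps HE Hx'.
move: (gamma_path v x') (gamma_last v x') (gamma_uniq v x').
case/splitPr: Hin => s1 s2 Hp Hl Hu.
have Hs2 : x :: s2 = [:: x; x'].
  rewrite -(gamma_edge He); symmetry; apply: gammaE.
  rewrite /path_from (path_suffix Hp) //= eqxx /=.
  by move: Hl; rewrite last_cat /= => ->.
rewrite Hs2 in Hu *.
have [a [r Har]] : exists a r, s1 ++ [:: x] = a :: r /\ last a r = x.
  case: s1 {Hp Hl Hu Hs2} => [|a r]; first by exists x, [::].
  by exists a, (r ++ [:: x]); rewrite last_cat.
have Hs : s1 ++ [:: x; x'] = rcons (a :: r) x'.
  by rewrite -(proj1 Har) -cats1 -catA.
rewrite Hs in Hu *; rewrite edges_rcons (proj2 Har) -cats1 mem_cat inE.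
case: (boolP (eps == [set x; x'])) => Hne; first by rewrite orbT.
rewrite orbF; apply/negP => H.
by move: Hu; rewrite rcons_uniq (mem_edges H Hx').
Qed.
Variable isA : pred T.
Variable v0 : T.
Hypothesis Harr : forall a, isA a -> valency E a = 1%N.
Hypothesis Hroot : is_root E isA q v0.
Hypothesis Hf : forall a, isA a -> f a = 0 \/ f a = 1.

Lemma valency_C x x' : [set x; x'] \in E -> x != x' ->
  valency E x' = (#|Cset x x'|).+1.
Proof.
move=> He Hxx'; rewrite /valency.
have -> : [set e0 in E | x' \in e0] = [set x; x'] |: Cset x x'.
  apply/setP => eps; rewrite /Cset !inE.
  case: (boolP (eps == [set x; x'])) => [/eqP ->|Hne] /=; first by rewrite He !inE eqxx orbT.
  by rewrite andbT.
by rewrite cardsU1 /Cset in_set eqxx !andbF.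
Qed.

Lemma prod_child x x' y eps : eps \in Cset x x' -> eps \in edges_of (gamma E x' y) ->
  \prod_(eps2 in Cset x x' | eps2 \notin edges_of (gamma E x' y)) q eps2 x' =
  \prod_(eps2 in Cset x x' | eps2 != eps) q eps2 x'.
Proof.
move=> Hc Hin; apply: eq_bigl => eps2.
case Hc2: (eps2 \in Cset x x') => //=.
apply/idP/idP.
  by apply: contra => /eqP ->.
by apply: contra => H; apply/eqP; apply: child_uniq Hc2 Hc H Hin.
Qed.

Lemma xhat_self y : xhat E f q y y = f y.
Proof.
rewrite /xhat gamma_self big_pred0 ?mulr1 // => eps.
apply/negbTE/negP => /andP[_ /andP[/and3P[_ _ /existsP[u /andP[Hu Hy]]] Hn]].
by move: Hy; rewrite inE => /eqP Hu'; move: Hn; rewrite -Hu' Hu.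
Qed.

Lemma main n : forall x x', (#|Dset x x'| <= n)%N -> [set x; x'] \in E -> x != x' ->
  x \in gamma E v0 x' ->
  pfun E isA f q x [set x; x'] =
    1 + \sum_(y in Yset E isA f x [set x; x']) phi E q x y * ((valency E y)%:Z - 2).
Proof.
elim: n => [|n IH] x x' Hn He Hxx' Hin.
  by move: Hn; rewrite leqn0 => /eqP/cards0_eq Hd; move: (x'_in_D He); rewrite Hd inE.
have HL : pfun E isA f q x [set x; x'] =
   (if isA x' && (f x' != 0) then f x' * \prod_(eps in Cset x x') q eps x' else 0) +
   \sum_(eps in Cset x x') (\prod_(eps2 in Cset x x' | eps2 != eps) q eps2 x') *
       pfun E isA f q x' eps.
  rewrite /pfun (eq_bigl (fun a => (isA a && (f a != 0)) &&
        ([set x; x'] \in edges_of (gamma E x a)))); last by move=> a; rewrite andbA.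
  rewrite (sum_split (fun a => isA a && (f a != 0)) (xhat E f q x) He Hxx').
  congr (_ + _).
    case: ifP => // _; rewrite (xhat_cons He Hxx'); last by rewrite gamma_self.
    rewrite xhat_self gamma_self; congr (_ * _).
    by apply: eq_bigl => eps; rewrite andbT.
  apply: eq_bigr => eps Hc; rewrite mulr_sumr; apply: eq_big => a.
    by rewrite andbA.
  move=> /andP[_ Ha].
  rewrite (xhat_cons He Hxx'); last by rewrite -edge_dir //; apply: child_back Hc Ha.
  by rewrite (prod_child Hc Ha) mulrC.
have HR : \sum_(y in Yset E isA f x [set x; x']) phi E q x y * ((valency E y)%:Z - 2) =
   (if is_vertex isA x' || in_A0 isA f x'
    then \prod_(eps in Cset x x') q eps x' * ((valency E x')%:Z - 2) else 0) +
   \sum_(eps in Cset x x') (\prod_(eps2 in Cset x x' | eps2 != eps) q eps2 x') *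
       (pfun E isA f q x' eps - 1).
  rewrite (eq_bigl (fun y => (is_vertex isA y || in_A0 isA f y) &&
        ([set x; x'] \in edges_of (gamma E x y)))); last by move=> y; rewrite /Yset inE.
  rewrite (sum_split (fun y => is_vertex isA y || in_A0 isA f y)
            (fun y => phi E q x y * ((valency E y)%:Z - 2)) He Hxx').
  congr (_ + _).
    case: ifP => // _; rewrite (phi_cons He Hxx'); last by rewrite gamma_self.
    rewrite /phi gamma_self /phi_path /= big_nil mul1r; congr (_ * _).
    by apply: eq_bigl => eps; rewrite andbT.
  apply: eq_bigr => eps Hc.
  have [HcE Hx'e Hne] : [/\ eps \in E, x' \in eps & eps != [set x; x']].
    by move: Hc; rewrite /Cset in_set => /and3P[].
  have [c /andP[Hc1 Hc2]] : exists c, (c \in eps) && (c != x').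
    apply/existsP; apply: contraT; rewrite negb_exists => /forallP Hall.
    have : #|eps| = 2%N by apply: edge_card.
    have -> : eps = [set x'].
      apply/setP => z; rewrite inE; apply/idP/idP => [Hz|/eqP ->//].
      by move: (Hall z); rewrite Hz /= negbK.
    by rewrite cards1.
  have Hec : eps = [set x'; c] by apply: card2_eq => //; [apply: edge_card | rewrite eq_sym].
  have Hcc : [set x'; c] \in Cset x x' by rewrite -Hec.
  have IH' := IH x' c.
  rewrite -Hec in IH'.
  have Hgc : x' \in gamma E v0 c.
    have Hn1 : eps \notin edges_of (gamma E v0 x') by rewrite (root_edges He Hxx' Hin HcE Hx'e).
    rewrite Hec in Hn1.
    have HcE' : [set x'; c] \in E by rewrite -Hec.
    rewrite (gamma_rcons HcE' Hn1).
    rewrite mem_rcons inE.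
    have Hg := gamma_head v0 x'; have Hl := gamma_last v0 x'.
    rewrite Hg /= in Hl; rewrite Hg.
    by have := mem_last v0 (behead (gamma E v0 x')); rewrite Hl => ->; rewrite orbT.
  have Hdc : (#|Dset x' c| <= n)%N.
    by rewrite -ltnS; apply: leq_trans Hn; apply: D_proper.
  have Hx'c : x' != c by rewrite eq_sym.
  rewrite (IH' Hdc HcE Hx'c Hgc).
  rewrite (_ : forall a : int, 1 + a - 1 = a); last by move=> a; ring.
  rewrite mulr_sumr; apply: eq_big => y.
    by rewrite /Yset inE.
  move=> /andP[_ Hy].
  rewrite (phi_cons He Hxx'); last by rewrite -edge_dir //; apply: child_back Hc Hy.
  by rewrite (prod_child Hc Hy); ring.
rewrite HL HR (valency_C He Hxx').
have Hx'v0 : x' != v0.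
  apply: contraNneq Hxx' => Hx'; move: Hin; rewrite Hx' gamma_self inE.
  by [].
case HA: (isA x').
  have HC0 : Cset x x' = set0.
    apply: cards0_eq; have := Harr HA; rewrite (valency_C He Hxx').
    by case.
  rewrite HC0 !big_set0 /is_vertex /in_A0 HA /=.
  by case: (Hf HA) => ->; rewrite cards0 ?eqxx ?oner_eq0 /=; ring.
rewrite /is_vertex HA /=.
have [_ _ Hr] := Hroot.
have [_ Hcard] := Hr x' (negbT HA) Hx'v0.
have Hcard' : (#|[set i in Cset x x' | q i x' != 1]| <= 1)%N.
  apply: leq_trans Hcard; apply: subset_leq_card; apply/subsetP => eps.
  rewrite /Cset !in_set.
  case HE: (eps \in E) => //=; case Hx: (x' \in eps) => //=.
  by rewrite (root_edges He Hxx' Hin HE Hx).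
rewrite [X in _ = 1 + (_ + X)](eq_bigr (fun eps => (\prod_(eps2 in Cset x x' | eps2 != eps) q eps2 x') *
     pfun E isA f q x' eps - \prod_(eps2 in Cset x x' | eps2 != eps) q eps2 x'));
  last by move=> eps _; rewrite mulrBr mulr1.
rewrite sumrB (sum_prod_excl Hcard').
rewrite -addn1 PoszD.
ring.
Qed.
End Paths.

Theorem lemma6p3 (T : finType) (E : {set {set T}}) (isA : pred T)
    (f : T -> int) (q : {set T} -> T -> int) (v0 : T) :
  decorated_rooted_tree E isA q v0 ->
  (forall a, isA a -> f a = 0 \/ f a = 1) ->
  forall (x : T) (e : {set T}), out_pair E v0 x e ->
  pfun E isA f q x e =
    1 + \sum_(y in Yset E isA f x e) phi E q x y * ((valency E y)%:Z - 2).
Proof.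
move=> [[Htree Harr _ _] Hroot] Hf x e [He [x' [Hex Hlt]]].
move: Hlt; rewrite /tree_lt => /andP[Hxx' Hin].
subst e.
exact: (main Htree Harr Hroot Hf (leqnn _) He Hxx' Hin).
Qed.
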